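(* Let $V=\{1,\dots,n\}$, let $H_1=(V,E_1)$ with $E_1=\{e\subseteq V : |e|\ge 2\}$, and let $H_2=(V,E_2)$ with $E_2=\{e\subseteq V : 2\le|e|\le 3\}$. If the toric ideal $I_{H_2}$ is generated in degree at most $d$, then the toric ideal $I_{H_1}$ is generated in degree at most $d$.
   Context: For a hypergraph $H=(V,E)$ (edges are nonempty subsets of $V=\{1,\dots,n\}$, no repeated edges) and a field $K$, the toric ideal $I_H$ is the kernel of the $K$-algebra homomorphism $K[t_e : e\in E]\to K[x_1,\dots,x_n]$, $t_e\mapsto\prod_{j\in e}x_j$. An ideal is generated in degree at most $d$ if it has a generating set consisting of polynomials of degree at most $d$. *)

(* Defs.v *)
From HB Require Import structures.
From mathcomp Require Import all_boot all_order all_algebra.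
From mathcomp Require Import mpoly.
Set Implicit Arguments. Unset Strict Implicit. Unset Printing Implicit Defensive.
Import GRing.Theory.
Local Open Scope ring_scope.

(* A hypergraph on V = 'I_n (i.e. {1,...,n} shifted to {0,...,n-1}) is given
   by its edge set E : {set {set 'I_n}} (a set, so no repeated edges; the
   edges of interest below are all nonempty).  The variables t_e of the
   polynomial ring K[t_e : e in E] are indexed by 'I_#|E| via enum_val. *)

Definition edge_monomial (K : fieldType) (n : nat) (e : {set 'I_n}) : {mpoly K[n]} :=
  \prod_(j in e) 'X_j.

Definition toric_map (K : fieldType) (n : nat) (E : {set {set 'I_n}})
  (p : {mpoly K[#|E|]}) : {mpoly K[n]} :=
  mmap (fun c : K => c%:MP) (fun i : 'I_#|E| => edge_monomial K (enum_val i)) p.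

Definition toric_ideal (K : fieldType) (n : nat) (E : {set {set 'I_n}})
  : pred {mpoly K[#|E|]} :=
  fun p => toric_map p == 0.

(* An ideal I (given as a predicate) is generated in degree at most d if it
   has a generating set S of polynomials of (total) degree at most d:
   S is contained in I, each element of S has degree <= d (msize = 1 + degree,
   msize 0 = 0), and every element of I is a finite polynomial combination
   of elements of S. *)
Definition generated_in_degree_le (K : fieldType) (m : nat)
  (I : pred {mpoly K[m]}) (d : nat) : Prop :=
  exists S : pred {mpoly K[m]},
    (forall g, S g -> I g /\ (msize g <= d.+1)%N) /\
    (forall f, I f -> exists (r : nat) (c g : 'I_r -> {mpoly K[m]}),
        (forall i, S (g i)) /\ f = \sum_(i < r) c i * g i).

Definition E1 (n : nat) : {set {set 'I_n}} := [set e : {set 'I_n} | (2 <= #|e|)%N].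
Definition E2 (n : nat) : {set {set 'I_n}} := [set e : {set 'I_n} | (2 <= #|e| <= 3)%N].

(* Main.v *)
Require Import Defs.
From HB Require Import structures.
From mathcomp Require Import all_boot all_order all_algebra.
From mathcomp Require Import mpoly.
From mathcomp Require Import ring zify.
From Stdlib Require Import ClassicalEpsilon.
Set Implicit Arguments. Unset Strict Implicit. Unset Printing Implicit Defensive.
Import GRing.Theory.
Local Open Scope ring_scope.

Section Gen.
Variable K : fieldType.

Lemma mmap_ext a b (h1 h2 : 'I_a -> {mpoly K[b]}) p : h1 =1 h2 ->
  mmap (fun c : K => c%:MP) h1 p = mmap (fun c : K => c%:MP) h2 p.
Proof. by move=> e; rewrite /mmap; apply: eq_bigr => m _; rewrite (mmap1_eq _ e). Qed.

Lemma mmap_comp a b c (h : 'I_a -> {mpoly K[b]})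
  (phi : {rmorphism {mpoly K[b]} -> {mpoly K[c]}}) p :
  (forall k : K, phi k%:MP = k%:MP) ->
  phi (mmap (fun c : K => c%:MP) h p) = mmap (fun c : K => c%:MP) (fun i => phi (h i)) p.
Proof.
move=> hC; rewrite /mmap rmorph_sum; apply: eq_bigr => m _.
rewrite rmorphM hC /mmap1 rmorph_prod; congr (_ * _); apply: eq_bigr => i _.
by rewrite rmorphXn.
Qed.

Lemma mmapXi a b (h : 'I_a -> {mpoly K[b]}) i :
  mmap (fun c : K => c%:MP) h 'X_i = h i.
Proof. by rewrite mmapX mmap1U. Qed.

Lemma mmapC' a b (h : 'I_a -> {mpoly K[b]}) k :
  mmap (fun c : K => c%:MP) h k%:MP = k%:MP.
Proof. by rewrite mmapC. Qed.

Definition span a (S : {mpoly K[a]} -> Prop) (f : {mpoly K[a]}) :=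
  exists s : seq ({mpoly K[a]} * {mpoly K[a]}),
    (forall x, x \in s -> S x.2) /\ f = \sum_(x <- s) x.1 * x.2.

Lemma span0 a (S : {mpoly K[a]} -> Prop) : span S 0.
Proof. by exists [::]; split => //; rewrite big_nil. Qed.

Lemma span_gen a (S : {mpoly K[a]} -> Prop) g : S g -> span S g.
Proof.
move=> Sg; exists [:: (1, g)]; split; first by move=> x; rewrite inE => /eqP ->.
by rewrite big_seq1 mul1r.
Qed.

Lemma spanD a (S : {mpoly K[a]} -> Prop) f g : span S f -> span S g -> span S (f + g).
Proof.
move=> [s1 [h1 ->]] [s2 [h2 ->]]; exists (s1 ++ s2); split; last by rewrite big_cat.
by move=> x; rewrite mem_cat => /orP [/h1|/h2].
Qed.

Lemma spanM a (S : {mpoly K[a]} -> Prop) p f : span S f -> span S (p * f).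
Proof.
move=> [s [h ->]]; exists (map (fun x : {mpoly K[a]} * {mpoly K[a]} => (p * x.1, x.2)) s); split.
  by move=> x /mapP [y ys ->]; apply: (h y).
by rewrite big_map mulr_sumr; apply: eq_bigr => x _; rewrite mulrA.
Qed.

Lemma spanMr a (S : {mpoly K[a]} -> Prop) p f : span S f -> span S (f * p).
Proof. by rewrite mulrC; apply: spanM. Qed.

Lemma spanN a (S : {mpoly K[a]} -> Prop) f : span S f -> span S (- f).
Proof. by move=> h; rewrite -mulN1r; apply: spanM. Qed.

Lemma span_sub a (S S' : {mpoly K[a]} -> Prop) f : (forall g, S g -> S' g) ->
  span S f -> span S' f.
Proof. by move=> hS [s [h ->]]; exists s; split => // x /h /hS. Qed.

Lemma span_morph a b (S : {mpoly K[a]} -> Prop)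
  (phi : {rmorphism {mpoly K[a]} -> {mpoly K[b]}}) f :
  span S f -> span (fun g => exists g', S g' /\ g = phi g') (phi f).
Proof.
move=> [s [h ->]]; exists (map (fun x : {mpoly K[a]} * {mpoly K[a]} => (phi x.1, phi x.2)) s); split.
  by move=> x /mapP [y ys ->]; exists y.2; split => //; apply: (h y).
by rewrite big_map rmorph_sum; apply: eq_bigr => x _; rewrite rmorphM.
Qed.

Lemma span_of_gen a (S : {mpoly K[a]} -> Prop) f r (c g : 'I_r -> {mpoly K[a]}) :
  (forall i, S (g i)) -> f = \sum_(i < r) c i * g i -> span S f.
Proof.
move=> hg ->; exists (map (fun i => (c i, g i)) (enum 'I_r)); split.
  by move=> x /mapP [y _ ->]; apply: hg.
by rewrite big_map big_enum.
Qed.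

Lemma gen_of_span a (S : {mpoly K[a]} -> Prop) f : span S f ->
  exists (r : nat) (c g : 'I_r -> {mpoly K[a]}),
        (forall i, S (g i)) /\ f = \sum_(i < r) c i * g i.
Proof.
move=> [s [h ->]]; exists (size s), (fun i => (tnth (in_tuple s) i).1),
  (fun i => (tnth (in_tuple s) i).2); split.
  by move=> i; apply: h; apply: mem_tnth.
by rewrite (big_tnth _ _ (in_tuple s)).
Qed.

End Gen.
Section Gen2.
Variable K : fieldType.

Lemma mmap1_rename a b (s : 'I_a -> 'I_b) m :
  mmap1 (fun j => 'X_(s j) : {mpoly K[b]}) m = 'X_[(\sum_(j < a) U_(s j) *+ m j)%MM].
Proof.
rewrite /mmap1; under eq_bigr do rewrite mpolyXn.
by apply/esym; rewrite (big_morph (@mpolyX b K) (@mpolyXD b K) (@mpolyX0 b K)).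
Qed.

Lemma mdeg_rename a b (s : 'I_a -> 'I_b) (m : 'X_{1..a}) :
  mdeg (\sum_(j < a) U_(s j) *+ m j)%MM = mdeg m.
Proof.
rewrite mdeg_sum mdegE; apply: eq_bigr => j _.
by rewrite mdegMn mdeg1 mul1n.
Qed.

Lemma msize_rename a b (s : 'I_a -> 'I_b) (p : {mpoly K[a]}) :
  (msize (mmap (fun c : K => c%:MP) (fun j => 'X_(s j) : {mpoly K[b]}) p) <= msize p)%N.
Proof.
rewrite {1}/mmap; apply: leq_trans (mmeasure_sum _ _ _ _) _.
apply/bigmax_leqP_seq => m hm _.
rewrite mmap1_rename mul_mpolyC; apply: leq_trans (msizeZ_le _ _) _.
by rewrite msizeX mdeg_rename; apply: msize_mdeg_lt.
Qed.

Lemma msize_G a (i j k : 'I_a) : (msize ('X_i - 'X_j * 'X_k : {mpoly K[a]}) <= 3)%N.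
Proof.
apply: leq_trans (mmeasureD_le _ _ _) _; rewrite mmeasureN geq_max msizeX mdeg1 /=.
by rewrite -mpolyXD msizeX mdegD !mdeg1.
Qed.

End Gen2.
Section Small.
Variables (K : fieldType) (n : nat).

Definition mask (e : {set 'I_n}) : 'X_{1..n} := (\sum_(k in e) U_(k))%MM.

Lemma maskE e k : mask e k = (k \in e).
Proof.
rewrite /mask mnm_sumE.
case: (boolP (k \in e)) => ke.
  rewrite (bigD1 k) //= mnm1E eqxx big1 // => l /andP [_ lk].
  by rewrite mnm1E (negbTE lk).
rewrite big1 // => l le; rewrite mnm1E.
have -> : (l == k) = false by apply/negbTE; apply: contraNneq ke => <-.
by [].
Qed.

Lemma mask_inj : injective mask.
Proof.
move=> e1 e2 h; apply/setP => k; have := maskE e1 k; rewrite h maskE.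
by case: (k \in e1); case: (k \in e2).
Qed.

Lemma mask0 : mask set0 = 0%MM.
Proof. by apply/mnmP => k; rewrite maskE inE mnm0E. Qed.

Lemma edge_monoE e : edge_monomial K e = 'X_[mask e].
Proof.
rewrite /edge_monomial /mask; apply/esym.
by rewrite (big_morph (@mpolyX n K) (@mpolyXD n K) (@mpolyX0 n K)).
Qed.

Definition Msum (E : {set {set 'I_n}}) (m : 'X_{1..#|E|}) : 'X_{1..n} :=
  (\sum_(i < #|E|) mask (enum_val i) *+ m i)%MM.

Lemma toric_mmap1 (E : {set {set 'I_n}}) (m : 'X_{1..#|E|}) :
  mmap1 (fun i : 'I_#|E| => edge_monomial K (enum_val i)) m = 'X_[Msum m].
Proof.
rewrite /mmap1; under eq_bigr do rewrite edge_monoE mpolyXn.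
by apply/esym; rewrite (big_morph (@mpolyX n K) (@mpolyXD n K) (@mpolyX0 n K)).
Qed.

Lemma deg1_cases a (m : 'X_{1..a}) : (mdeg m <= 1)%N -> m = 0%MM \/ exists j, m = U_(j)%MM.
Proof.
rewrite leq_eqVlt ltnS leqn0; case/orP => [/mdeg1P [j /eqP ->]|h].
  by right; exists j.
by left; apply/eqP; rewrite -mdeg_eq0.
Qed.

Lemma Msum0 (E : {set {set 'I_n}}) : Msum (0%MM : 'X_{1..#|E|}) = 0%MM.
Proof. by rewrite /Msum big1 // => i _; rewrite mnm0E mulm0n. Qed.

Lemma MsumU (E : {set {set 'I_n}}) (j : 'I_#|E|) : Msum U_(j)%MM = mask (enum_val j).
Proof.
rewrite /Msum (bigD1 j) //= mnm1E eqxx mulm1n big1 ?addm0 // => i ij.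
by rewrite mnm1E eq_sym (negbTE ij) mulm0n.
Qed.

Lemma Msum_inj (E : {set {set 'I_n}}) : (forall e, e \in E -> 1 <= #|e|)%N ->
  forall m1 m2 : 'X_{1..#|E|}, (mdeg m1 <= 1)%N -> (mdeg m2 <= 1)%N ->
  Msum m1 = Msum m2 -> m1 = m2.
Proof.
move=> HE m1 m2 h1 h2.
have nz (j : 'I_#|E|) : mask (enum_val j) <> 0%MM.
  rewrite -mask0 => /mask_inj ej; have := HE _ (enum_valP j).
  by rewrite ej cards0.
case: (deg1_cases h1) => [->|[j1 ->]]; case: (deg1_cases h2) => [->|[j2 ->]] //.
- by rewrite Msum0 MsumU => /esym /nz.
- by rewrite Msum0 MsumU => /nz.
- by rewrite !MsumU => /mask_inj /enum_val_inj ->.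
Qed.

Lemma kernel_small (E : {set {set 'I_n}}) : (forall e, e \in E -> 1 <= #|e|)%N ->
  forall g, @toric_ideal K n E g -> (msize g <= 2)%N -> g = 0.
Proof.
move=> HE g /eqP Tg hs; apply/eqP; rewrite -msupp_eq0; apply/eqP.
case Es: (msupp g) => [|m0 s] //; exfalso.
have m0in : m0 \in msupp g by rewrite Es inE eqxx.
have dm m : m \in msupp g -> (mdeg m <= 1)%N.
  by move=> /msize_mdeg_lt h; rewrite -ltnS; apply: leq_trans h hs.
have : (@toric_map K n E g)@_(Msum m0) = g@_m0.
  rewrite /toric_map /mmap raddf_sum /= (bigD1_seq m0) ?msupp_uniq //=.
  rewrite toric_mmap1 mcoeffCM mcoeffX eqxx mulr1 big_seq_cond big1 ?addr0 //.
  move=> m /andP [hm nm]; rewrite toric_mmap1 mcoeffCM mcoeffX.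
  have -> : (Msum m == Msum m0) = false.
    apply/negbTE; apply: contra nm => /eqP /(Msum_inj HE (dm _ hm) (dm _ m0in)) ->.
    by [].
  by rewrite mulr0.
rewrite Tg mcoeff0 => /esym h.
by move: m0in; rewrite mcoeff_msupp h eqxx.
Qed.

Section Tor.
Variable E : {set {set 'I_n}}.
Implicit Types p q : {mpoly K[#|E|]}.
Lemma toricX i : @toric_map K n E 'X_i = edge_monomial K (enum_val i).
Proof. by rewrite /toric_map; apply: mmapXi. Qed.
Lemma toricB p q : @toric_map K n E (p - q) = @toric_map K n E p - @toric_map K n E q.
Proof. by rewrite /toric_map; apply: rmorphB. Qed.
Lemma toricM p q : @toric_map K n E (p * q) = @toric_map K n E p * @toric_map K n E q.
Proof. by rewrite /toric_map; apply: rmorphM. Qed.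
End Tor.

End Small.
Lemma setU_D (T : finType) (a e : {set T}) : a \subset e -> e = a :|: (e :\: a).
Proof.
move=> /subsetP sae; apply/setP => z; rewrite !inE.
by case za: (z \in a) => //=; rewrite (sae z za).
Qed.

Lemma disj_D (T : finType) (a e : {set T}) : [disjoint a & e :\: a].
Proof. by rewrite disjoints_subset; apply/subsetP => z za; rewrite !inE za. Qed.

Section Main.
Variables (K : fieldType) (n : nat).
Local Notation N1 := #|E1 n|.
Local Notation N2 := #|E2 n|.

Lemma E1P e : (e \in E1 n) = (2 <= #|e|)%N. Proof. by rewrite inE. Qed.
Lemma E2P e : (e \in E2 n) = (2 <= #|e| <= 3)%N. Proof. by rewrite inE. Qed.
Lemma sub21 e : e \in E2 n -> e \in E1 n. Proof. by rewrite E1P E2P => /andP []. Qed.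

Definition idx (j : 'I_N2) : 'I_N1 := enum_rank_in (sub21 (enum_valP j)) (enum_val j).
Lemma idxE j : enum_val (idx j) = enum_val j.
Proof. by rewrite /idx enum_rankK_in // sub21 // enum_valP. Qed.

Definition iota (p : {mpoly K[N2]}) : {mpoly K[N1]} :=
  mmap (fun c : K => c%:MP) (fun j : 'I_N2 => 'X_(idx j) : {mpoly K[N1]}) p.
Lemma iotaD p q : iota (p + q) = iota p + iota q. Proof. by rewrite /iota; apply: rmorphD. Qed.
Lemma iotaB p q : iota (p - q) = iota p - iota q. Proof. by rewrite /iota; apply: rmorphB. Qed.
Lemma iotaM p q : iota (p * q) = iota p * iota q. Proof. by rewrite /iota; apply: rmorphM. Qed.
Lemma iotaC c : iota c%:MP = c%:MP. Proof. by rewrite /iota; apply: mmapC'. Qed.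
Lemma iotaX j : iota 'X_j = 'X_(idx j). Proof. by rewrite /iota; apply: mmapXi. Qed.
Lemma span_iota S f : span S f -> span (fun g => exists g', S g' /\ g = iota g') (iota f).
Proof. exact: (span_morph (mmap (fun c : K => c%:MP) (fun j : 'I_N2 => 'X_(idx j) : {mpoly K[N1]}))). Qed.
Lemma msize_iota p : (msize (iota p) <= msize p)%N.
Proof. exact: msize_rename. Qed.

Lemma toric_iota p : @toric_map K n (E1 n) (iota p) = @toric_map K n (E2 n) p.
Proof.
rewrite /iota /toric_map (@mmap_comp K _ _ _ _ (mmap (fun c : K => c%:MP)
   (fun i : 'I_N1 => edge_monomial K (enum_val i)))); last by move=> k; apply: mmapC'.
by apply: mmap_ext => j; rewrite -idxE; apply: mmapXi.
Qed.

Definition G2 (g : {mpoly K[N1]}) := exists i j k : 'I_N1,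
  enum_val i = enum_val j :|: enum_val k /\ [disjoint enum_val j & enum_val k] /\
  g = 'X_i - 'X_j * 'X_k.

Lemma edge_monoU (a b : {set 'I_n}) : [disjoint a & b] ->
  edge_monomial K (a :|: b) = edge_monomial K a * edge_monomial K b.
Proof. by move=> d; rewrite /edge_monomial -bigU //; apply: eq_bigl => z; rewrite !inE. Qed.

Lemma G2_ok g : G2 g -> @toric_ideal K n (E1 n) g /\ (msize g <= 3)%N.
Proof.
move=> [i [j [k [he [hd ->]]]]]; split; last exact: msize_G.
by rewrite /toric_ideal /= toricB toricM !toricX he edge_monoU // subrr.
Qed.

Lemma W_ex (i : 'I_N1) : exists w : {mpoly K[N2]},
  @toric_map K n (E2 n) w = edge_monomial K (enum_val i) /\ span G2 ('X_i - iota w).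
Proof.
suff: forall k (i : 'I_N1), (#|enum_val i| <= k)%N -> exists w : {mpoly K[N2]},
  @toric_map K n (E2 n) w = edge_monomial K (enum_val i) /\ span G2 ('X_i - iota w).
  by move=> /(_ _ i (leqnn _)).
elim=> [|k IH] {}i hk.
  by have := enum_valP i; rewrite E1P; move: hk; rewrite leqn0 => /eqP ->.
have He1 : enum_val i \in E1 n := enum_valP i.
case: (leqP #|enum_val i| 3) => h3.
  have He2 : enum_val i \in E2 n by rewrite E2P -E1P He1 h3.
  exists 'X_(enum_rank_in He2 (enum_val i)); split.
    by rewrite toricX enum_rankK_in.
  rewrite iotaX.
  have -> : idx (enum_rank_in He2 (enum_val i)) = i.
    by apply: enum_val_inj; rewrite idxE enum_rankK_in.
  by rewrite subrr; apply: span0.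
have : (0 < #|enum_val i|)%N by apply: leq_trans h3.
case/card_gt0P => x xe.
have : (0 < #|enum_val i :\ x|)%N.
  by move: h3; rewrite (cardsD1 x) xe add1n ltnS; apply: leq_trans.
case/card_gt0P => y; rewrite !inE => /andP [yx ye].
set e := enum_val i in hk He1 h3 xe ye *.
have ae : [set x; y] \subset e.
  by apply/subsetP => z; rewrite !inE => /orP [/eqP ->|/eqP ->].
have ca : #|[set x; y]| = 2 by rewrite cards2 eq_sym yx.
have cb : #|e :\: [set x; y]| = (#|e| - 2)%N.
  by rewrite cardsD (setIidPr ae) ca.
have Ha1 : [set x; y] \in E1 n by rewrite E1P ca.
have Ha2 : [set x; y] \in E2 n by rewrite E2P ca.
have Hb1 : e :\: [set x; y] \in E1 n.
  by rewrite E1P cb; move: h3; lia.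
set ja := enum_rank_in Ha1 [set x; y].
set jb := enum_rank_in Hb1 (e :\: [set x; y]).
set ra := enum_rank_in Ha2 [set x; y].
have Eja : enum_val ja = [set x; y] by rewrite enum_rankK_in.
have Ejb : enum_val jb = e :\: [set x; y] by rewrite enum_rankK_in.
have Era : enum_val ra = [set x; y] by rewrite enum_rankK_in.
have [wb [Tb Sb]] : exists w : {mpoly K[N2]},
  @toric_map K n (E2 n) w = edge_monomial K (enum_val jb) /\ span G2 ('X_jb - iota w).
  by apply: IH; rewrite Ejb cb; move: hk; lia.
have hU : e = enum_val ja :|: enum_val jb by rewrite Eja Ejb -setU_D.
have hD : [disjoint enum_val ja & enum_val jb] by rewrite Eja Ejb disj_D.
exists ('X_ra * wb); split.
  by rewrite toricM toricX Tb Era -Eja -edge_monoU // -hU.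
rewrite iotaM iotaX.
have -> : idx ra = ja by apply: enum_val_inj; rewrite idxE Era Eja.
have -> : 'X_i - 'X_ja * iota wb = ('X_i - 'X_ja * 'X_jb) + 'X_ja * ('X_jb - iota wb).
  by rewrite mulrBr addrA subrK.
apply: spanD; last exact: spanM.
by apply: span_gen; exists i, ja, jb.
Qed.

Definition Wf (i : 'I_N1) : {mpoly K[N2]} :=
  proj1_sig (constructive_indefinite_description _ (W_ex i)).
Lemma WfP i : @toric_map K n (E2 n) (Wf i) = edge_monomial K (enum_val i) /\
  span G2 ('X_i - iota (Wf i)).
Proof. exact: (proj2_sig (constructive_indefinite_description _ (W_ex i))). Qed.

Definition psi (p : {mpoly K[N1]}) : {mpoly K[N2]} := mmap (fun c : K => c%:MP) Wf p.
Lemma psiD p q : psi (p + q) = psi p + psi q. Proof. by rewrite /psi; apply: rmorphD. Qed.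
Lemma psiM p q : psi (p * q) = psi p * psi q. Proof. by rewrite /psi; apply: rmorphM. Qed.
Lemma psiC c : psi c%:MP = c%:MP. Proof. by rewrite /psi; apply: mmapC'. Qed.
Lemma psiX i : psi 'X_i = Wf i. Proof. by rewrite /psi; apply: mmapXi. Qed.

Lemma toric_psi p : @toric_map K n (E2 n) (psi p) = @toric_map K n (E1 n) p.
Proof.
rewrite /psi {1}/toric_map (@mmap_comp K _ _ _ _ (mmap (fun c : K => c%:MP)
   (fun i : 'I_N2 => edge_monomial K (enum_val i)))); last by move=> k; apply: mmapC'.
by apply: mmap_ext => j; exact: (WfP j).1.
Qed.

Lemma span_diff f : span G2 (f - iota (psi f)).
Proof.
pose P f := span G2 (f - iota (psi f)).
have PD f1 f2 : P f1 -> P f2 -> P (f1 + f2).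
  rewrite /P psiD iotaD => h1 h2.
  have -> : f1 + f2 - (iota (psi f1) + iota (psi f2)) =
    (f1 - iota (psi f1)) + (f2 - iota (psi f2)) by rewrite opprD addrACA.
  exact: spanD.
have PM f1 f2 : P f1 -> P f2 -> P (f1 * f2).
  rewrite /P psiM iotaM => h1 h2.
  have -> : f1 * f2 - iota (psi f1) * iota (psi f2) =
    (f1 - iota (psi f1)) * f2 + iota (psi f1) * (f2 - iota (psi f2)).
    by rewrite mulrBl mulrBr addrA subrK.
  by apply: spanD; [apply: spanMr | apply: spanM].
have PC c : P c%:MP by rewrite /P psiC iotaC subrr; apply: span0.
have PX i : P 'X_i by rewrite /P psiX; exact: (WfP i).2.
rewrite -/(P f) (mpolyE f).
apply: (big_ind P); [by rewrite -(mpolyC0 _ K); apply: (PC) | exact: (PD) |].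
move=> m _; rewrite -mul_mpolyC; apply: (PM) => //.
rewrite mpolyXE_id; apply: (big_ind P); [by rewrite -(mpolyC1 _ K); apply: (PC) | exact: (PM)|].
move=> i _; elim: (m i) => [|k IHk]; first by rewrite expr0 -(mpolyC1 _ K); apply: (PC).
by rewrite exprS; apply: (PM).
Qed.

Lemma main_large d : (2 <= d)%N ->
  generated_in_degree_le (@toric_ideal K n (E2 n)) d ->
  generated_in_degree_le (@toric_ideal K n (E1 n)) d.
Proof.
move=> d2 [S2 [HS2 GS2]].
pose Q g := G2 g \/ exists g', S2 g' /\ g = iota g'.
have QP g : (if excluded_middle_informative (Q g) then true else false) <-> Q g.
  by case: excluded_middle_informative.
pose S1 g : bool := if excluded_middle_informative (Q g) then true else false.
exists S1; split.
  move=> g /QP [/G2_ok [h1 h2] | [g' [/HS2 [h1 h2] ->]]]; split => //.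
  - by apply: leq_trans h2 _.
  - by rewrite /toric_ideal /= toric_iota.
  - exact: leq_trans (msize_iota _) h2.
move=> f hf; apply: (@gen_of_span K _ (fun x => S1 x)).
have -> : f = (f - iota (psi f)) + iota (psi f) by rewrite subrK.
apply: spanD.
  by apply: span_sub (span_diff f) => g hg; apply/QP; left.
have hpsi : @toric_ideal K n (E2 n) (psi f).
  by rewrite /toric_ideal /= toric_psi.
case: (GS2 _ hpsi) => r [c [g [hg ->]]].
apply: span_sub (span_iota (@span_of_gen K _ (fun x => is_true (S2 x)) _ _ c g hg (erefl _))) => x [g' [h ->]].
by apply/QP; right; exists g'.
Qed.
End Main.

Lemma exists_nz (K : fieldType) n : (3 < n)%N ->
  exists f : {mpoly K[#|E2 n|]}, @toric_ideal K n (E2 n) f /\ f != 0.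
Proof.
case: n => [|[|[|[|n']]]] // _.
pose o (k : nat) : 'I_n'.+4 := inord k.
have oE i j : (i < 4)%N -> (j < 4)%N -> (o i == o j) = (i == j).
  by move=> hi hj; rewrite -val_eqE /= !inordK //; lia.
pose A i j := [set o i; o j].
have AE i j : (i < 4)%N -> (j < 4)%N -> i != j -> A i j \in E2 n'.+4.
  by move=> hi hj hij; rewrite E2P cards2 oE // hij.
have h01 := AE 0 1 isT isT isT.
have h23 := AE 2 3 isT isT isT.
have h02 := AE 0 2 isT isT isT.
have h13 := AE 1 3 isT isT isT.
set a := enum_rank_in h01 (A 0 1).
set b := enum_rank_in h23 (A 2 3).
set c := enum_rank_in h02 (A 0 2).
set d := enum_rank_in h13 (A 1 3).
have disj i j k l : (i < 4)%N -> (j < 4)%N -> (k < 4)%N -> (l < 4)%N ->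
   i != k -> i != l -> j != k -> j != l -> [disjoint A i j & A k l].
  move=> hi hj hk hl ik il jk jl; rewrite disjoints_subset; apply/subsetP => z.
  rewrite !inE => /orP [] /eqP ->; rewrite !oE //; apply/norP; split => //.
exists ('X_a * 'X_b - 'X_c * 'X_d); split.
  rewrite /toric_ideal /= toricB !toricM !toricX !enum_rankK_in //.
  rewrite -!edge_monoU ?disj //.
  have -> : A 0 1 :|: A 2 3 = A 0 2 :|: A 1 3.
    by apply/setP => z; rewrite !inE; do ! case: (_ == _).
  by rewrite subrr.
have ne X Y (hX : X \in E2 n'.+4) (hY : Y \in E2 n'.+4) : X != Y ->
    enum_rank_in hX X != enum_rank_in hY Y.
  apply: contra => /eqP h; apply/eqP.
  by rewrite -(enum_rankK_in hX hX) -(enum_rankK_in hY hY) h.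
have ca : c != a.
  apply: ne; apply/negP => /eqP h.
  have : o 2 \in A 0 1 by rewrite -h !inE eqxx orbT.
  by rewrite !inE !oE.
have da : d != a.
  apply: ne; apply/negP => /eqP h.
  have : o 3 \in A 0 1 by rewrite -h !inE eqxx orbT.
  by rewrite !inE !oE.
apply/eqP => f0.
have := congr1 (mcoeff (U_(a) + U_(b))%MM) f0.
rewrite mcoeffB -!mpolyXD !mcoeffX eqxx mcoeff0.
have -> : (U_(c) + U_(d) == U_(a) + U_(b))%MM = false.
  apply/negbTE/negP => /eqP /mnmP /(_ a); rewrite !mnmDE !mnm1E eqxx.
  by rewrite (negbTE ca) (negbTE da).
by rewrite subr0 => /eqP; rewrite oner_eq0.
Qed.

Theorem lemma5p5 (K : fieldType) (n d : nat) :
  generated_in_degree_le (@toric_ideal K n (E2 n)) d ->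
  generated_in_degree_le (@toric_ideal K n (E1 n)) d.
Proof.
case: (leqP 2 d) => hd; first exact: main_large.
case: (leqP n 3) => hn.
  have -> : E1 n = E2 n.
    apply/setP => e; rewrite !inE.
    have he : (#|e| <= n)%N by rewrite -[n in (_ <= n)%N]card_ord; apply: max_card.
    by case: (2 <= #|e|)%N => //=; rewrite (leq_trans he hn).
  by [].
move=> [S2 [HS2 GS2]]; exfalso.
have S0 g : S2 g -> g = 0.
  move=> /HS2 [h1 h2]; apply: (kernel_small _ h1).
    by move=> e; rewrite inE => /andP [h _]; apply: ltnW.
  by apply: leq_trans h2 _.
have [f [hf nf]] := exists_nz K hn.
have [r [c [g [hg fE]]]] := GS2 _ hf.
move: nf; rewrite fE big1 ?eqxx // => i _.
by rewrite (S0 _ (hg i)) mulr0.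
Qed.
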